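(* Let $\mu$ be a product distribution on $\mathcal{X}^n$ and let $(X_1,\dots,X_n)\sim\mu$. Let $\mathsf{M}$ be any $k$-pass streaming algorithm (possibly using private randomness) with memory size $s$ bits running on the stream $X_1,\dots,X_n$. Then $$MIC(\mathsf{M},\mu)\le 2ksn.$$
   Context: A $k$-pass streaming algorithm $\mathsf{M}$ reads the stream $X_1,\dots,X_n$ in order $k$ times; at every step it uses fresh independent private randomness to move to its next memory state, and every memory state is an $s$-bit string. $\mathsf{M}_{(i,j)}$ denotes the (random) memory state in pass $i\in[k]$ after reading $j$ elements; $\mathsf{M}_{(1,0)}$ is the starting state and $\mathsf{M}_{(i+1,0)}=\mathsf{M}_{(i,n)}$. Write $\mathsf{M}_{(\le i,j)}=(\mathsf{M}_{(1,j)},\dots,\mathsf{M}_{(i,j)})$ (empty when $i=0$). The multi-pass information complexity is $$MIC(\mathsf{M},\mu)=\sum_{i=1}^{k}\sum_{j=1}^n\sum_{\ell=1}^{j}\mathrm I\big(\mathsf{M}_{(i,j)};X_\ell\mid \mathsf{M}_{(\le i,\ell-1)},\mathsf{M}_{(\le i-1,j)}\big)+\sum_{i=1}^{k}\sum_{j=1}^n\sum_{\ell=j+1}^{n}\mathrm I\big(\mathsf{M}_{(i,j)};X_\ell\mid \mathsf{M}_{(\le i-1,\ell-1)},\mathsf{M}_{(\le i-1,j)}\big),$$ where $\mathrm I(\cdot;\cdot\mid\cdot)$ is conditional mutual information and randomness is over $X\sim\mu$ and the algorithm's private randomness. *)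

(* Defs.v *)
From HB Require Import structures.
From mathcomp Require Import all_boot all_order all_algebra.
From mathcomp Require Import reals exp.
Set Implicit Arguments. Unset Strict Implicit. Unset Printing Implicit Defensive.
Import Order.TTheory GRing.Theory Num.Theory.
Local Open Scope ring_scope.

Section Info.
Variable R : realType.

Definition log2 (x : R) : R := ln x / ln 2.

Definition is_distr (T : finType) (d : {ffun T -> R}) : Prop :=
  (forall t, 0 <= d t) /\ \sum_(t : T) d t = 1.

Definition prob_ev (Omega : finType) (p : Omega -> R) (E : pred Omega) : R :=
  \sum_(w | E w) p w.

Definition cmi (Omega : finType) (p : Omega -> R)
    (TA TB TC : eqType) (A : Omega -> TA) (B : Omega -> TB) (C : Omega -> TC) : R :=
  \sum_(w : Omega)
     p w * log2 ((prob_ev p (fun w' => [&& A w' == A w, B w' == B w & C w' == C w])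
                  * prob_ev p (fun w' => C w' == C w))
               / (prob_ev p (fun w' => (A w' == A w) && (C w' == C w))
                  * prob_ev p (fun w' => (B w' == B w) && (C w' == C w)))).

(* An outcome is (x, m): x is the stream (X_1,...,X_n) (x j = X_{j+1}), and
   m i j is the memory state after reading element j+1 in pass i+1, i.e.
   m i j = M_(i+1, j+1) (0-based ordinals i : 'I_k, j : 'I_n). *)
Definition outcome (X : finType) (n k s : nat) :=
  ({ffun 'I_n -> X} * {ffun 'I_k -> {ffun 'I_n -> s.-tuple bool}})%type.

(* M_(i,j) in the paper's indexing (1 <= i <= k, 0 <= j <= n):
   the state at global time t = (i-1) n + j; time 0 is the starting state m0,
   so that M_(1,0) = m0 and M_(i+1,0) = M_(i,n). *)
Definition Mst (X : finType) (n k s : nat) (m0 : s.-tuple bool)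
    (w : outcome X n k s) (i j : nat) : s.-tuple bool :=
  match ((i.-1) * n + j)%N with
  | 0 => m0
  | t.+1 =>
      match @insub _ (fun a => (a < k)%N) 'I_k (t %/ n)%N,
            @insub _ (fun a => (a < n)%N) 'I_n (t %% n)%N with
      | Some a, Some b => w.2 a b
      | _, _ => m0
      end
  end.

Definition Mle (X : finType) (n k s : nat) (m0 : s.-tuple bool)
    (w : outcome X n k s) (i j : nat) : seq (s.-tuple bool) :=
  [seq Mst m0 w i' j | i' <- iota 1 i].

Definition Xel (X : finType) (n k s : nat) (l : 'I_n) (w : outcome X n k s) : X :=
  w.1 l.

(* Joint law of the stream and of all memory states: the stream is drawn from
   the product distribution prod_j mu_j, the algorithm starts in m0 and, in
   pass i+1 when reading element j+1, moves from its current state to a new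
   state drawn (with fresh independent randomness) from T i j (state) (X_{j+1}). *)
Definition joint (X : finType) (n k s : nat) (mu : 'I_n -> {ffun X -> R})
    (m0 : s.-tuple bool)
    (T : 'I_k -> 'I_n -> s.-tuple bool -> X -> {ffun s.-tuple bool -> R})
    (w : outcome X n k s) : R :=
  (\prod_(j < n) mu j (w.1 j)) *
  \prod_(i < k) \prod_(j < n) T i j (Mst m0 w i.+1 j) (w.1 j) (w.2 i j).

(* Multi-pass information complexity MIC(M, mu), with the paper's indices
   i = i0+1, j = j0+1, l = l0+1. *)
Definition MIC (X : finType) (n k s : nat) (mu : 'I_n -> {ffun X -> R})
    (m0 : s.-tuple bool)
    (T : 'I_k -> 'I_n -> s.-tuple bool -> X -> {ffun s.-tuple bool -> R}) : R :=
  let p := joint mu m0 T in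
  \sum_(i0 < k) \sum_(j0 < n) \sum_(l0 < n | (l0 <= j0)%N)
     cmi p (fun w => Mst m0 w i0.+1 j0.+1) (Xel l0)
           (fun w => (Mle m0 w i0.+1 l0, Mle m0 w i0 j0.+1))
  + \sum_(i0 < k) \sum_(j0 < n) \sum_(l0 < n | (j0 < l0)%N)
     cmi p (fun w => Mst m0 w i0.+1 j0.+1) (Xel l0)
           (fun w => (Mle m0 w i0 l0, Mle m0 w i0 j0.+1)).

End Info.

(* Main.v *)
Require Import Defs.
From HB Require Import structures.
From mathcomp Require Import all_boot all_order all_algebra.
From mathcomp Require Import reals exp.
From mathcomp Require Import zify ring lra.
Set Implicit Arguments. Unset Strict Implicit. Unset Printing Implicit Defensive.
Import Order.TTheory GRing.Theory Num.Theory.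
Local Open Scope ring_scope.


Section Info.
Variable R : realType.
Variable Omega : finType.
Variable p : Omega -> R.
Hypothesis p_ge0 : forall w, 0 <= p w.
Hypothesis p_sum1 : \sum_w p w = 1.

Definition Pr (T : eqType) (f : Omega -> T) (w : Omega) : R :=
  prob_ev p (fun w' => f w' == f w).
Definition Hn (T : eqType) (f : Omega -> T) : R :=
  - \sum_w p w * log2 (Pr f w).

Lemma Pr_ge (T : eqType) (f : Omega -> T) w : p w <= Pr f w.
Proof.
rewrite /Pr /prob_ev (bigD1 w) //= lerDl.
by apply: sumr_ge0 => i _; apply: p_ge0.
Qed.

Lemma Pr_ge0 (T : eqType) (f : Omega -> T) w : 0 <= Pr f w.
Proof. exact: le_trans (p_ge0 w) (Pr_ge f w). Qed.

Lemma Pr_gt0 (T : eqType) (f : Omega -> T) w : 0 < p w -> 0 < Pr f w.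
Proof. by move=> h; apply: lt_le_trans h (Pr_ge f w). Qed.

Lemma Pr_ext (T T' : eqType) (f : Omega -> T) (g : Omega -> T') :
  (forall w w', (f w' == f w) = (g w' == g w)) -> forall w, Pr f w = Pr g w.
Proof. by move=> h w; apply: eq_bigl => w'; rewrite h. Qed.

Lemma Hn_ext (T T' : eqType) (f : Omega -> T) (g : Omega -> T') :
  (forall w w', (f w' == f w) = (g w' == g w)) -> Hn f = Hn g.
Proof.
by move=> h; rewrite /Hn; congr (- _); apply: eq_bigr => w _; rewrite (Pr_ext h).
Qed.

Lemma ln2_gt0 : 0 < ln (2 : R).
Proof. by apply: ln_gt0; rewrite ltr1n. Qed.

Lemma log2M (x y : R) : 0 < x -> 0 < y -> log2 (x * y) = log2 x + log2 y.
Proof.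
by move=> hx hy; rewrite /log2 lnM ?posrE // mulrDl.
Qed.

Lemma log2V (x : R) : 0 < x -> log2 (x^-1) = - log2 x.
Proof. by move=> hx; rewrite /log2 lnV ?posrE // mulNr. Qed.

Lemma log2_div (x y : R) : 0 < x -> 0 < y -> log2 (x / y) = log2 x - log2 y.
Proof. by move=> hx hy; rewrite log2M ?invr_gt0 // log2V. Qed.

Lemma sum_log4 (a b c d : Omega -> R) :
  (forall w, 0 < p w -> [/\ 0 < a w, 0 < b w, 0 < c w & 0 < d w]) ->
  (forall w, 0 < p w -> a w * b w = c w * d w) ->
  \sum_w p w * log2 (a w) + \sum_w p w * log2 (b w) =
  \sum_w p w * log2 (c w) + \sum_w p w * log2 (d w).
Proof.
move=> hpos heq; rewrite -!big_split /=; apply: eq_bigr => w _.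
have [hp|hp] := boolP (0 < p w).
  have [ha hb hc hd] := hpos w hp.
  by rewrite -!mulrDr -!log2M // heq.
have -> : p w = 0 by apply/eqP; rewrite eq_le p_ge0 andbT leNgt.
by rewrite !mul0r addr0.
Qed.

Lemma cmiE (TA TB TC : eqType) (A : Omega -> TA) (B : Omega -> TB) (C : Omega -> TC) :
  cmi p A B C = Hn (fun w => (A w, C w)) + Hn (fun w => (B w, C w))
              - Hn (fun w => (A w, (B w, C w))) - Hn C.
Proof.
rewrite /cmi /Hn.
have E3 w : prob_ev p (fun w' => [&& A w' == A w, B w' == B w & C w' == C w])
   = Pr (fun w => (A w, (B w, C w))) w.
  by apply: eq_bigl => w'; rewrite /= !xpair_eqE.
have E2 (T : eqType) (F : Omega -> T) w : prob_ev p (fun w' => (F w' == F w) && (C w' == C w))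
   = Pr (fun w => (F w, C w)) w.
  by apply: eq_bigl => w'; rewrite /= !xpair_eqE.
rewrite (eq_bigr (fun w => p w * log2 (Pr (fun w => (A w, (B w, C w))) w) + p w * log2 (Pr C w)
    - p w * log2 (Pr (fun w => (A w, C w)) w) - p w * log2 (Pr (fun w => (B w, C w)) w))); last first.
  move=> w _; rewrite E3 !E2.
  have [hp|hp] := boolP (0 < p w).
    rewrite log2_div ?mulr_gt0 ?Pr_gt0 // !log2M ?Pr_gt0 //.
    ring.
  have -> : p w = 0 by apply/eqP; rewrite eq_le p_ge0 andbT leNgt.
  by rewrite !mul0r !subr0 addr0.
rewrite !sumrB big_split /=.
ring.
Qed.


Lemma ln_ge1V (x : R) : 0 < x -> 1 - x^-1 <= ln x.
Proof.
move=> hx.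
have h1 : -1 < x^-1 - 1 by rewrite ltrBrDr addrC subrr invr_gt0.
have := le_ln1Dx h1; rewrite addrC subrK lnV ?posrE //.
by move=> h; lra.
Qed.

Lemma ln_le_sub1 (x : R) : 0 < x -> ln x <= x - 1.
Proof.
move=> hx; have h1 : -1 < x - 1 by rewrite ltrBrDr addrC subrr.
by have := le_ln1Dx h1; rewrite addrC subrK.
Qed.

Lemma Pr_ind (T : eqType) (f : Omega -> T) w : Pr f w = \sum_u (f u == f w)%:R * p u.
Proof.
rewrite /Pr /prob_ev big_mkcond /=; apply: eq_bigr => u _.
by case: (f u == f w); rewrite ?mul1r ?mul0r.
Qed.

Lemma class_sum (T : eqType) (f : Omega -> T) t :
  \sum_w (f w == t)%:R * (p w / Pr f w) <= 1.
Proof.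
set Q := prob_ev p (fun w' => f w' == t).
rewrite (eq_bigr (fun w => (f w == t)%:R * (p w / Q))); last first.
  by move=> w _; case: eqP => [ft|]; rewrite ?mul0r // /Pr ft.
have hQ : \sum_w (f w == t)%:R * p w = Q.
  rewrite /Q /prob_ev [RHS]big_mkcond; apply: eq_bigr => w _.
  by case: (f w == t); rewrite ?mul1r ?mul0r.
have -> : \sum_w (f w == t)%:R * (p w / Q) = Q / Q.
  rewrite -[in X in _ = X / _]hQ mulr_suml.
  by apply: eq_bigr => w _; rewrite mulrA.
by have [->|nz] := eqVneq Q 0; [rewrite mul0r ler01 | rewrite divff].
Qed.

Lemma p_eq0 w : ~~ (0 < p w) -> p w = 0.
Proof. by move=> hp; apply/eqP; rewrite eq_le p_ge0 andbT leNgt. Qed.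

Lemma cmi_ge0 (TA TB TC : eqType) (A : Omega -> TA) (B : Omega -> TB) (C : Omega -> TC) :
  0 <= cmi p A B C.
Proof.
pose PAC := Pr (fun w => (A w, C w)).
pose PBC := Pr (fun w => (B w, C w)).
pose PABC := Pr (fun w => (A w, (B w, C w))).
pose PC := Pr C.
have E3 w : prob_ev p (fun w' => [&& A w' == A w, B w' == B w & C w' == C w]) = PABC w.
  by apply: eq_bigl => w'; rewrite /= !xpair_eqE.
have E2 (T : eqType) (F : Omega -> T) w : prob_ev p (fun w' => (F w' == F w) && (C w' == C w))
   = Pr (fun w => (F w, C w)) w.
  by apply: eq_bigl => w'; rewrite /= !xpair_eqE.
pose q w := PAC w * PBC w / (PABC w * PC w).
pose X u v w := ((A u, C u) == (A w, C w))%:R * p u * (((B v, C v) == (B w, C w))%:R * p v)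
       * (p w / (PABC w * PC w)).
have key : \sum_w p w * q w <= 1.
  have -> : \sum_w p w * q w = \sum_u \sum_v \sum_w X u v w.
    rewrite (eq_bigr (fun w => \sum_u \sum_v X u v w)); last first.
      move=> w _.
      have -> : p w * q w = (PAC w * PBC w) * (p w / (PABC w * PC w)) by rewrite /q mulrCA.
      rewrite /PAC /PBC !Pr_ind big_distrlr /= mulr_suml; apply: eq_bigr => u _.
      by rewrite mulr_suml; apply: eq_bigr => v _.
    by rewrite exchange_big; apply: eq_bigr => u _; rewrite exchange_big.
  have inner u v : \sum_w X u v w <= (C v == C u)%:R * p v * (p u / PC u).
    have [hC|hC] := eqVneq (C v) (C u).
    - rewrite (eq_bigr (fun w => (p u * p v / PC u) *
          (((A w, (B w, C w)) == (A u, (B v, C u)))%:R * (p w / PABC w)))); last first.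
        move=> w _; rewrite /X.
        have [hw|hw] := eqVneq (A w, (B w, C w)) (A u, (B v, C u)).
          case: hw => hA hB hCw.
          have -> : PC w = PC u by rewrite /PC /Pr hCw.
          rewrite hA hB hCw hC !eqxx invfM /=; ring.
        rewrite /= mul0r mulr0.
        case h1: ((A u, C u) == (A w, C w)); case h2: ((B v, C v) == (B w, C w));
          rewrite /= ?mulr0n ?mul0r ?mulr0 ?mul0r //.
        move/eqP: h1 => [hA hC1]; move/eqP: h2 => [hB hC2].
        by rewrite -hA -hB -hC1 eqxx in hw.
      rewrite -(mulr_sumr _ _ _ (p u * p v / PC u)).
      have h0 : 0 <= p u * p v / PC u by rewrite divr_ge0 ?mulr_ge0 ?Pr_ge0.
      apply: le_trans (ler_wpM2l h0 (class_sum (fun w => (A w, (B w, C w))) (A u, (B v, C u)))) _.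
      by rewrite mulr1 mul1r [X in _ <= X]mulrCA mulrA.
    - rewrite mul0r mul0r big1 // => w _; rewrite /X.
      case h1: ((A u, C u) == (A w, C w)); case h2: ((B v, C v) == (B w, C w));
        rewrite /= ?mulr0n ?mul0r ?mulr0 ?mul0r //.
      move/eqP: h1 => [hA hC1]; move/eqP: h2 => [hB hC2].
      by rewrite hC1 hC2 eqxx in hC.
  apply: (le_trans (y := \sum_u \sum_v (C v == C u)%:R * p v * (p u / PC u))).
    by apply: ler_sum => u _; apply: ler_sum => v _; exact: inner.
  rewrite -[X in _ <= X]p_sum1; apply: ler_sum => u _.
  rewrite -mulr_suml -(Pr_ind C u) -/(PC u).
  have [->|nz] := eqVneq (PC u) 0; first by rewrite mul0r p_ge0.
  by rewrite mulrCA divff // mulr1.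
rewrite /cmi.
apply: (le_trans (y := \sum_w p w * ((1 - q w) / ln 2))).
  have -> : \sum_w p w * ((1 - q w) / ln 2) = (\sum_w p w - \sum_w p w * q w) / ln 2.
    by rewrite -sumrB mulr_suml; apply: eq_bigr => w _; ring.
  by rewrite p_sum1 divr_ge0 ?subr_ge0 // ltW // ln2_gt0.
apply: ler_sum => w _.
have [hp|hp] := boolP (0 < p w); last by rewrite p_eq0 // !mul0r.
rewrite E3 !E2; apply: ler_wpM2l; first exact: p_ge0.
rewrite /log2 ler_pM2r ?invr_gt0 ?ln2_gt0 //.
have -> : q w = ((PABC w * PC w) / (PAC w * PBC w))^-1 by rewrite invf_div.
by apply: ln_ge1V; rewrite divr_gt0 ?mulr_gt0 ?Pr_gt0.
Qed.

Lemma natbM (b : bool) (x : R) : (b)%:R * x = if b then x else 0.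
Proof. by case: b; rewrite /= ?mulr1n ?mulr0n ?mul1r ?mul0r. Qed.

Definition Hc (TA TG : eqType) (A : Omega -> TA) (G : Omega -> TG) :=
  Hn (fun w => (A w, G w)) - Hn G.

Lemma Pr_le_pair (T1 T2 : eqType) (A : Omega -> T1) (G : Omega -> T2) w :
  Pr (fun w => (A w, G w)) w <= Pr G w.
Proof.
rewrite !Pr_ind; apply: ler_sum => u _; rewrite xpair_eqE !natbM.
by case: (A u == A w); case: (G u == G w); rewrite /= ?lexx ?p_ge0.
Qed.

Lemma Hc_ge0 (TA TG : eqType) (A : Omega -> TA) (G : Omega -> TG) : 0 <= Hc A G.
Proof.
rewrite /Hc /Hn opprK addrC -sumrB; apply: sumr_ge0; move=> w _.
have [hp|hp] := boolP (0 < p w); last by rewrite p_eq0 // !mul0r subrr.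
rewrite -mulrBr mulr_ge0 ?p_ge0 // subr_ge0 /log2 ler_pM2r ?invr_gt0 ?ln2_gt0 //.
have h1 := @Pr_gt0 _ (fun w => (A w, G w)) w hp; have h2 := @Pr_gt0 _ G w hp.
by rewrite ler_ln ?posrE //; exact: (@Pr_le_pair _ _ A G w).
Qed.

Lemma Omega_inh : exists w0 : Omega, true.
Proof.
case: (pickP (fun _ : Omega => true)) => [w0 _|h]; first by exists w0.
have E : \sum_w p w = 0 by rewrite (eq_bigl xpred0) ?big_pred0_eq.
by move: p_sum1; rewrite E => /eqP; rewrite eq_sym oner_eq0.
Qed.

Lemma Hc_le (TA : finType) (TG : eqType) (A : Omega -> TA) (G : Omega -> TG) :
  Hc A G <= log2 #|TA|%:R.
Proof.
have [w0 _] := Omega_inh.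
have cpos : (0 < #|TA|)%N by apply/card_gt0P; exists (A w0).
set N : R := #|TA|%:R.
have N0 : 0 < N by rewrite /N ltr0n.
pose PAG := Pr (fun w => (A w, G w)).
pose PG := Pr G.
pose S := \sum_w p w * (PG w / PAG w).
have SN : S <= N.
  have -> : S = \sum_u p u * \sum_w (G w == G u)%:R * (p w / PAG w).
    rewrite /S (eq_bigr (fun w => \sum_u (G u == G w)%:R * p u * (p w / PAG w)));
      last by move=> w _; rewrite /PG Pr_ind mulrCA mulr_suml.
    rewrite exchange_big; apply: eq_bigr => u _; rewrite mulr_sumr.
    by apply: eq_bigr => w _; rewrite [in RHS]mulrA [(p u * _)]mulrC eq_sym.
  apply: (le_trans (y := \sum_u p u * N)); last by rewrite -mulr_suml p_sum1 mul1r.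
  apply: ler_sum => u _; apply: ler_wpM2l; first exact: p_ge0.
  have -> : \sum_w (G w == G u)%:R * (p w / PAG w) =
      \sum_(a : TA) \sum_w ((A w, G w) == (a, G u))%:R * (p w / PAG w).
    rewrite exchange_big; apply: eq_bigr => w _.
    rewrite (bigD1 (A w)) //= big1 ?addr0; first by rewrite xpair_eqE eqxx.
    by move=> a ha; rewrite xpair_eqE eq_sym (negbTE ha) /= mulr0n mul0r.
  apply: (le_trans (y := \sum_(a : TA) 1)); last by rewrite sumr_const.
  by apply: ler_sum => a _; exact: (class_sum (fun w => (A w, G w)) (a, G u)).
rewrite /Hc /Hn opprK addrC -sumrB.
apply: (le_trans (y := \sum_w p w * ((ln N + PG w / (N * PAG w) - 1) / ln 2))).
  apply: ler_sum => w _.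
  have [hp|hp] := boolP (0 < p w); last by rewrite p_eq0 // !mul0r subrr.
  have h1 : 0 < PG w by apply: Pr_gt0.
  have h2 : 0 < PAG w by apply: Pr_gt0.
  rewrite -mulrBr; apply: ler_wpM2l; first exact: p_ge0.
  rewrite /log2 -mulrBl ler_pM2r ?invr_gt0 ?ln2_gt0 //.
  have h := @ln_le_sub1 (PG w / (N * PAG w)) (divr_gt0 h1 (mulr_gt0 N0 h2)).
  rewrite ln_div ?posrE ?mulr_gt0 // lnM ?posrE // in h.
  rewrite -/(PG w) -/(PAG w); lra.
have -> : \sum_w p w * ((ln N + PG w / (N * PAG w) - 1) / ln 2)
    = (ln N * \sum_w p w + S / N - \sum_w p w) / ln 2.
  rewrite mulr_sumr /S mulr_suml -big_split -sumrB mulr_suml; apply: eq_bigr => w _ /=.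
  rewrite invfM; ring.
rewrite p_sum1 mulr1 /log2 ler_pM2r ?invr_gt0 ?ln2_gt0 //.
have : S / N <= 1 by rewrite ler_pdivrMr // mul1r.
lra.
Qed.

Lemma Hn_prod (TF TC TD : eqType) (F : Omega -> TF) (C : Omega -> TC) (D : Omega -> TD) :
  (forall w, Pr (fun w => (F w, (C w, D w))) w * Pr C w =
             Pr (fun w => (F w, C w)) w * Pr (fun w => (C w, D w)) w) ->
  Hn (fun w => (F w, (C w, D w))) + Hn C = Hn (fun w => (F w, C w)) + Hn (fun w => (C w, D w)).
Proof.
move=> h; rewrite /Hn -!opprD; congr (- _); apply: sum_log4 => // w hp.
by split; apply: Pr_gt0.
Qed.

Lemma cmi_condind (TA TB TC TD : eqType) (A : Omega -> TA) (B : Omega -> TB)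
   (C : Omega -> TC) (D : Omega -> TD) :
  (forall w, Pr (fun w => (A w, (C w, D w))) w * Pr C w =
             Pr (fun w => (A w, C w)) w * Pr (fun w => (C w, D w)) w) ->
  (forall w, Pr (fun w => (B w, (C w, D w))) w * Pr C w =
             Pr (fun w => (B w, C w)) w * Pr (fun w => (C w, D w)) w) ->
  (forall w, Pr (fun w => ((A w, B w), (C w, D w))) w * Pr C w =
             Pr (fun w => ((A w, B w), C w)) w * Pr (fun w => (C w, D w)) w) ->
  cmi p A B C = cmi p A B (fun w => (C w, D w)).
Proof.
move=> hA hB hAB.
have := Hn_prod hA; have := Hn_prod hB.
have := @Hn_prod _ _ _ (fun w => (A w, B w)) C D hAB.
rewrite !cmiE.
have -> : Hn (fun w => (A w, (B w, (C w, D w)))) = Hn (fun w => ((A w, B w), (C w, D w))).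
  by apply: Hn_ext => w w'; rewrite !xpair_eqE !andbA.
have -> : Hn (fun w => (A w, (B w, C w))) = Hn (fun w => ((A w, B w), C w)).
  by apply: Hn_ext => w w'; rewrite !xpair_eqE !andbA.
move=> *; lra.
Qed.

Lemma cmi_ext (TA TB TC TB' TC' : eqType) (A : Omega -> TA) (B : Omega -> TB)
   (C : Omega -> TC) (B' : Omega -> TB') (C' : Omega -> TC') :
  (forall w w', (B w' == B w) = (B' w' == B' w)) ->
  (forall w w', (C w' == C w) = (C' w' == C' w)) ->
  cmi p A B C = cmi p A B' C'.
Proof.
move=> hB hC; rewrite !cmiE.
rewrite (@Hn_ext _ _ (fun w => (A w, C w)) (fun w => (A w, C' w))); last first.
  by move=> w w'; rewrite !xpair_eqE hC.
rewrite (@Hn_ext _ _ (fun w => (B w, C w)) (fun w => (B' w, C' w))); last first.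
  by move=> w w'; rewrite !xpair_eqE hB hC.
rewrite (@Hn_ext _ _ (fun w => (A w, (B w, C w))) (fun w => (A w, (B' w, C' w)))); last first.
  by move=> w w'; rewrite !xpair_eqE hB hC.
by rewrite (Hn_ext hC).
Qed.

Lemma tele (TA : finType) (TB TC TG TM : eqType) (A : Omega -> TA)
  (B : nat -> Omega -> TB) (Cc : nat -> Omega -> TC) (G : nat -> Omega -> TG)
  (M : nat -> Omega -> TM) (lo hi : nat) :
  (lo <= hi)%N ->
  (forall l, (lo <= l < hi)%N -> cmi p A (B l) (Cc l) = cmi p A (B l) (G l)) ->
  (forall l, (lo <= l < hi)%N -> forall w w', (G l.+1 w' == G l.+1 w) =
        ((M l w', (B l w', G l w')) == (M l w, (B l w, G l w)))) ->
  \sum_(lo <= l < hi) cmi p A (B l) (Cc l) <= log2 #|TA|%:R.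
Proof.
move=> lohi hC hG.
pose h l := Hc A (G l).
apply: (le_trans (y := \sum_(lo <= l < hi) (h l - h l.+1))).
  rewrite big_nat [X in _ <= X]big_nat; apply: ler_sum => l hl.
  rewrite hC //.
  have e1 : cmi p A (B l) (G l) = h l - Hc A (fun w => (B l w, G l w)).
    by rewrite cmiE /h /Hc; ring.
  have e2 : h l.+1 = Hc A (fun w => (M l w, (B l w, G l w))).
    rewrite /h /Hc; congr (_ - _); apply: Hn_ext => w w'; rewrite ?xpair_eqE hG //.
  have e3 : cmi p A (M l) (fun w => (B l w, G l w)) =
      Hc A (fun w => (B l w, G l w)) - Hc A (fun w => (M l w, (B l w, G l w))).
    by rewrite cmiE /Hc; ring.
  have := cmi_ge0 A (M l) (fun w => (B l w, G l w)).
  rewrite e1 e2 e3; lra.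
rewrite (eq_bigr (fun l => - (h l.+1 - h l))); last by move=> l _; lra.
rewrite sumrN telescope_sumr // opprB.
have := Hc_ge0 A (G hi); have := Hc_le A (G lo).
rewrite /h; lra.
Qed.

End Info.

Section Mix.
Variable R : realType.
Variable Omega : finType.
Variable q : Omega -> R.

Lemma mix_prod (TF TC TD : eqType) (F : Omega -> TF) (C : Omega -> TC) (D : Omega -> TD)
  (mix : Omega -> Omega -> Omega) :
  (forall w1 w2, C w1 = C w2 -> [/\ mix (mix w1 w2) (mix w2 w1) = w1,
      q w1 * q w2 = q (mix w1 w2) * q (mix w2 w1),
      F (mix w1 w2) = F w1, D (mix w1 w2) = D w2 & C (mix w1 w2) = C w1]) ->
  forall w,
  prob_ev q (fun w' => (F w', (C w', D w')) == (F w, (C w, D w))) *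
    prob_ev q (fun w' => C w' == C w)
  = prob_ev q (fun w' => (F w', C w') == (F w, C w)) *
    prob_ev q (fun w' => (C w', D w') == (C w, D w)).
Proof.
move=> hm w.
pose h (j : Omega * Omega) := if C j.1 == C j.2 then (mix j.1 j.2, mix j.2 j.1) else j.
have hh : involutive h.
  case=> w1 w2; have [e|ne] := eqVneq (C w1) (C w2).
    have [i1 _ _ _ c1] := hm w1 w2 e; have [i2 _ _ _ c2] := hm w2 w1 (esym e).
    by rewrite /h /= e eqxx /= c1 c2 e eqxx /= i1 i2.
  by rewrite /h /= (negbTE ne) /= (negbTE ne).
rewrite /prob_ev !big_distrlr /= !pair_big_dep /=.
rewrite [RHS](reindex_inj (inv_inj hh)) /=.
apply: eq_big => [[w1 w2]|[w1 w2]] /=.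
  rewrite /h /=; have [e|ne] := eqVneq (C w1) (C w2) => /=.
    have [_ _ f1 d1 c1] := hm w1 w2 e; have [_ _ _ d2 c2] := hm w2 w1 (esym e).
    rewrite f1 c1 c2 d2 !xpair_eqE e.
    by case: (F w1 == F w); case: (C w2 == C w); case: (D w1 == D w).
  rewrite !xpair_eqE; apply/idP/idP.
    by move=> /andP[/and3P[_ /eqP e1 _] /eqP e2]; case/eqP: ne; rewrite e1 e2.
  by move=> /and3P[/andP[_ /eqP e1] /eqP e2 _]; case/eqP: ne; rewrite e1 e2.
case/andP => /eqP [_ e1 _] /eqP e2.
have e : C w1 = C w2 by rewrite e1 e2.
rewrite /h /= e eqxx /=; have [_ hq _ _ _] := hm w1 w2 e; exact: hq.
Qed.

End Mix.


Section Model.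
Variable R : realType.
Variables (X : finType) (n k s : nat).
Variable mu : 'I_n -> {ffun X -> R}.
Variable m0 : s.-tuple bool.
Variable T : 'I_k -> 'I_n -> s.-tuple bool -> X -> {ffun s.-tuple bool -> R}.
Hypothesis hmu : forall j, is_distr (mu j).
Hypothesis hT : forall i j st x, is_distr (T i j st x).

Local Notation Om := (outcome X n k s).
Local Notation St := (s.-tuple bool).

Definition stt (w : Om) (t : nat) : St :=
  match t with
  | 0 => m0
  | t.+1 =>
      match @insub _ (fun a => (a < k)%N) 'I_k (t %/ n)%N,
            @insub _ (fun a => (a < n)%N) 'I_n (t %% n)%N with
      | Some a, Some b => w.2 a b
      | _, _ => m0
      end
  end.

Arguments stt : simpl never.

Lemma MstE w i j : Mst m0 w i j = stt w (i.-1 * n + j)%N.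
Proof. by []. Qed.

Lemma divmod_cell (a b : nat) : (b < n)%N -> ((a * n + b) %/ n = a /\ (a * n + b) %% n = b)%N.
Proof.
move=> hb; have n0 : (0 < n)%N by apply: leq_ltn_trans hb.
by rewrite divnMDl // divn_small ?addn0 // modnMDl modn_small.
Qed.

Lemma cell_eq (a a' b b' : nat) : (b < n)%N -> (b' < n)%N ->
  (a' * n + b' == a * n + b)%N = (a' == a) && (b' == b).
Proof.
move=> hb hb'; apply/eqP/andP => [h|[/eqP-> /eqP->]] //.
have [d1 m1] := divmod_cell a hb; have [d2 m2] := divmod_cell a' hb'.
by split; apply/eqP; [rewrite -d1 -d2 h | rewrite -m1 -m2 h].
Qed.

Lemma time_lt (c : 'I_k * 'I_n) : (c.1 * n + c.2 < k * n)%N.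
Proof. have := ltn_ord c.2; have := ltn_ord c.1; nia. Qed.

Lemma stt_cell w (a : 'I_k) (b : 'I_n) : stt w (a * n + b)%N.+1 = w.2 a b.
Proof.
rewrite /stt; have [d m] := divmod_cell a (ltn_ord b); rewrite d m.
case: insubP => [a' _ ha'|]; last by rewrite ltn_ord.
case: insubP => [b' _ hb'|]; last by rewrite ltn_ord.
have -> : a' = a by apply: val_inj.
by have -> : b' = b by apply: val_inj.
Qed.

Definition upd (w : Om) (a : 'I_k) (b : 'I_n) (v : St) : Om :=
  (w.1, [ffun a' => [ffun b' => if (a' == a) && (b' == b) then v else w.2 a' b']]).

Lemma stt_upd w a b v u :
  stt (upd w a b v) u = if u == (a * n + b)%N.+1 then v else stt w u.
Proof.
case: u => [|t]; rewrite /stt //= eqSS.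
case: insubP => [a' _ ha'|ha].
  case: insubP => [b' _ hb'|hb].
    rewrite !ffunE; congr (if _ then _ else _).
    by rewrite {1}(divn_eq t n) -ha' -hb' cell_eq ?ltn_ord.
  have n0 : (0 < n)%N by apply: leq_ltn_trans (ltn_ord b).
  by rewrite ltn_pmod in hb.
case: eqP => // ht; exfalso.
by move: ha; rewrite ht (divmod_cell a (ltn_ord b)).1 ltn_ord.
Qed.

Definition mux (w : Om) : R := \prod_j mu j (w.1 j).
Definition fac (c : 'I_k * 'I_n) (w : Om) : R :=
  T c.1 c.2 (stt w (c.1 * n + c.2)%N) (w.1 c.2) (stt w (c.1 * n + c.2)%N.+1).

Lemma joint_factor w : joint mu m0 T w = mux w * \prod_c fac c w.
Proof.
rewrite /joint pair_big /=; congr (_ * _); apply: eq_bigr => [[a b]] _ /=.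
by rewrite /fac /= stt_cell MstE.
Qed.

Definition cellof (a : 'I_k) (b : 'I_n) (w : Om) : St := w.2 a b.

Lemma sum_upd (G : Om -> R) (a : 'I_k) (b : 'I_n) (d : St) :
  \sum_(w : Om) G w = \sum_(w : Om) (w.2 a b == d)%:R * \sum_(v : St) G (upd w a b v).
Proof.
rewrite (partition_big (cellof a b) xpredT) //=.
rewrite (eq_bigr (fun w : Om => \sum_v (cellof a b w == d)%:R * G (upd w a b v))); last first.
  by move=> w _; rewrite mulr_sumr.
rewrite [RHS]exchange_big /=; apply: eq_bigr => v _.
rewrite (reindex_onto (fun w => upd w a b v) (fun w => upd w a b d)) /=; last first.
  move=> [w1 w2] /eqP hw; rewrite /upd /=; congr (_, _).
  apply/ffunP => a'; rewrite ffunE; apply/ffunP => b'; rewrite !ffunE.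
  by case: ifP => [/andP[/eqP-> /eqP->]|h]; [rewrite -hw | rewrite h].
rewrite big_mkcond /=; apply: eq_bigr => w _.
rewrite /cellof !ffunE !eqxx /= natbM.
have -> : (upd (upd w a b v) a b d == w) = (w.2 a b == d).
  apply/eqP/eqP => [<-|hw]; first by rewrite /upd /= !ffunE !eqxx.
  rewrite /upd /=; case: w hw => w1 w2 /= hw; congr (_, _).
  apply/ffunP => a'; rewrite ffunE; apply/ffunP => b'; rewrite !ffunE.
  by case: ifP => [/andP[/eqP-> /eqP->]|h]; [rewrite hw | rewrite h].
by [].
Qed.

Definition ind (tau : nat) (w : Om) : bool :=
  [forall c : 'I_k * 'I_n, (tau <= c.1 * n + c.2)%N ==> (w.2 c.1 c.2 == m0)].
Definition pp (tau : nat) (w : Om) : R :=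
  (ind tau w)%:R * mux w * \prod_(c : 'I_k * 'I_n | (c.1 * n + c.2 < tau)%N) fac c w.
Definition Sig (E : pred Om) (tau : nat) : R := \sum_(w : Om) (E w)%:R * pp tau w.

Lemma SigE E tau : Sig E tau = prob_ev (pp tau) E.
Proof.
rewrite /Sig /prob_ev [RHS]big_mkcond; apply: eq_bigr => w _.
by rewrite natbM.
Qed.

Lemma Sig_full E : Sig E (k * n) = prob_ev (joint mu m0 T) E.
Proof.
rewrite /Sig /prob_ev [RHS]big_mkcond; apply: eq_bigr => w _.
rewrite natbM joint_factor /pp.
have -> : ind (k * n) w.
  by apply/forallP => c; apply/implyP => h; move: (time_lt c); rewrite ltnNge h.
rewrite mul1r (eq_bigl (fun c : 'I_k * 'I_n => true)) //.
by move=> c; rewrite time_lt.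
Qed.

Lemma upd1 w a b v : (upd w a b v).1 = w.1.
Proof. by []. Qed.

Lemma Sig_step (E : pred Om) (t0 tau : nat) :
  (forall w (a : 'I_k) (b : 'I_n) v, (t0 <= a * n + b)%N -> E (upd w a b v) = E w) ->
  (t0 <= tau)%N -> (tau < k * n)%N -> Sig E tau.+1 = Sig E tau.
Proof.
move=> hE ht0 htk.
have n0 : (0 < n)%N by case: n htk => //; rewrite muln0.
have ha : (tau %/ n < k)%N by rewrite ltn_divLR.
pose a := Ordinal ha.
pose b := Ordinal (ltn_pmod tau n0).
have htau : tau = (a * n + b)%N by rewrite /= -divn_eq.
rewrite /Sig (sum_upd _ a b m0); apply: eq_bigr => w _.
have hEv v : E (upd w a b v) = E w by apply: hE; rewrite -htau.
have hind v : ind tau.+1 (upd w a b v) = ind tau.+1 w.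
  apply: eq_forallb => c; case h: (tau.+1 <= c.1 * n + c.2)%N => //=.
  rewrite /upd /= !ffunE.
  rewrite (_ : (c.1 == a) && (c.2 == b) = false) //.
  by apply/negbTE/negP => /andP[/eqP e1 /eqP e2]; move: h; rewrite e1 e2 -htau ltnn.
have hprod v : \prod_(c : 'I_k * 'I_n | (c.1 * n + c.2 < tau.+1)%N) fac c (upd w a b v) =
    (\prod_(c : 'I_k * 'I_n | (c.1 * n + c.2 < tau)%N) fac c w) * T a b (stt w tau) (w.1 b) v.
  rewrite (bigD1 (a, b)) /=; last by rewrite -htau ltnSn.
  rewrite mulrC; congr (_ * _).
    have hfilt (c : 'I_k * 'I_n) :
        ((c.1 * n + c.2 < tau.+1)%N && (c != (a, b))) = (c.1 * n + c.2 < tau)%N.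
      case: (c =P (a, b)) => [->|hc]; first by rewrite /= -htau ltnn andbF.
      have hneq : (c.1 * n + c.2 != tau)%N.
        rewrite htau cell_eq ?ltn_ord //; apply/negP => /andP[/eqP h1 /eqP h2].
        apply: hc; case: c h1 h2 => c1 c2 /= h1 h2; congr (_, _); exact: val_inj.
      by rewrite andbT ltnS leq_eqVlt (negbTE hneq).
    apply: eq_big => c; first exact: hfilt.
    rewrite hfilt.
    move=> hc; rewrite /fac !stt_upd upd1 -htau.
    by rewrite (ltn_eqF (leqW hc)) eqSS (ltn_eqF hc).
  rewrite /fac !stt_upd upd1 /= -htau eqxx.
  by rewrite (ltn_eqF (ltnSn tau)).
have hsum : \sum_v T a b (stt w tau) (w.1 b) v = 1 by case: (hT a b (stt w tau) (w.1 b)).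
have hind2 : ind tau w = ind tau.+1 w && (w.2 a b == m0).
  apply/idP/idP.
    move/forallP => h; apply/andP; split.
      by apply/forallP => c; apply/implyP => hc; exact: (implyP (h c) (ltnW hc)).
    by have := implyP (h (a, b)); rewrite /= -htau leqnn; apply.
  case/andP => /forallP h1 /eqP h2; apply/forallP => c; apply/implyP => hc.
  case: (ltngtP tau (c.1 * n + c.2)) => [lt|gt|eq].
  - exact: (implyP (h1 c) lt).
  - by move: hc; rewrite leqNgt gt.
  - have : (c.1 * n + c.2 == a * n + b)%N by rewrite -eq -htau.
    rewrite cell_eq ?ltn_ord // => /andP[/eqP e1 /eqP e2].
    have -> : c = (a, b) by case: c e1 e2 {hc eq} => c1 c2 /= e1 e2; congr (_, _); exact: val_inj.
    by rewrite h2.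
rewrite /pp (eq_bigr (fun v => ((E w)%:R * ((ind tau.+1 w)%:R * mux w *
    \prod_(c : 'I_k * 'I_n | (c.1 * n + c.2 < tau)%N) fac c w)) * T a b (stt w tau) (w.1 b) v)); last first.
  by move=> v _; rewrite hEv hind hprod /mux upd1 !mulrA.
rewrite -mulr_sumr hsum mulr1 hind2 -mulnb natrM; ring.
Qed.

Lemma marg (E : pred Om) (t0 : nat) : (t0 <= k * n)%N ->
  (forall w (a : 'I_k) (b : 'I_n) v, (t0 <= a * n + b)%N -> E (upd w a b v) = E w) ->
  prob_ev (joint mu m0 T) E = prob_ev (pp t0) E.
Proof.
move=> ht hE.
have H : forall d, (t0 + d <= k * n)%N -> Sig E (t0 + d) = Sig E t0.
  elim => [|d IH] hd; first by rewrite addn0.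
  rewrite addnS (Sig_step hE) ?leq_addr // ?IH //; first by apply: ltnW; rewrite -addnS.
  by rewrite -addnS.
by rewrite -Sig_full -(subnKC ht) H ?subnKC // SigE.
Qed.

Section MixDef.
Variable midX : pred 'I_n.
Variable midS : pred nat.

Definition mix (w1 w2 : Om) : Om :=
  ([ffun b : 'I_n => if midX b then w1.1 b else w2.1 b],
   [ffun a : 'I_k => [ffun b : 'I_n => if midS (a * n + b)%N.+1 then w1.2 a b else w2.2 a b]]).

Lemma stt_mix w1 w2 u : stt (mix w1 w2) u = if midS u then stt w1 u else stt w2 u.
Proof.
case: u => [|t]; rewrite /stt /=; first by case: (midS 0).
case: insubP => [a' _ ha'|ha]; last by case: (midS _).
case: insubP => [b' _ hb'|hb]; last by case: (midS _).
rewrite !ffunE.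
by have -> : (a' * n + b')%N = t by rewrite ha' hb' -divn_eq.
Qed.

Lemma mix1 w1 w2 b : (mix w1 w2).1 b = if midX b then w1.1 b else w2.1 b.
Proof. by rewrite ffunE. Qed.

Lemma mix_invol w1 w2 : mix (mix w1 w2) (mix w2 w1) = w1.
Proof.
case: w1 w2 => [x1 m1] [x2 m2]; rewrite /mix /=; congr (_, _).
  by apply/ffunP => b; rewrite !ffunE; case: (midX b).
apply/ffunP => a; rewrite !ffunE; apply/ffunP => b; rewrite !ffunE.
by case: (midS _).
Qed.

Definition okS (Ag : Om -> Om -> Prop) (u : nat) :=
  midS u \/ (forall w1 w2, Ag w1 w2 -> stt w1 u = stt w2 u).

Lemma fac_congr (c : 'I_k * 'I_n) (w w' : Om) :
  stt w (c.1 * n + c.2)%N = stt w' (c.1 * n + c.2)%N ->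
  stt w (c.1 * n + c.2)%N.+1 = stt w' (c.1 * n + c.2)%N.+1 ->
  w.1 c.2 = w'.1 c.2 -> fac c w = fac c w'.
Proof. by rewrite /fac => -> -> ->. Qed.

Lemma pp_mix (t0 : nat) (Ag : Om -> Om -> Prop) :
  (forall u, (t0 < u)%N -> ~~ midS u) ->
  (forall (a : 'I_k) (b : 'I_n), (a * n + b < t0)%N ->
     (midX b /\ okS Ag (a * n + b)%N /\ okS Ag (a * n + b)%N.+1) \/
     (~~ midX b /\ ~~ midS (a * n + b)%N /\ ~~ midS (a * n + b)%N.+1)) ->
  forall w1 w2, Ag w1 w2 -> pp t0 w1 * pp t0 w2 = pp t0 (mix w1 w2) * pp t0 (mix w2 w1).
Proof.
move=> hfut hcl w1 w2 hag.
have hind (v1 v2 : Om) : ind t0 (mix v1 v2) = ind t0 v2.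
  apply: eq_forallb => c; case h: (t0 <= c.1 * n + c.2)%N => //=.
  by rewrite !ffunE (negbTE (hfut _ _)).
have hmux : mux (mix w1 w2) * mux (mix w2 w1) = mux w1 * mux w2.
  rewrite /mux -!big_split /=; apply: eq_bigr => j _.
  by rewrite !mix1; case: (midX j) => //; rewrite mulrC.
have okl u : okS Ag u -> stt (mix w1 w2) u = stt w1 u /\ stt (mix w2 w1) u = stt w2 u.
  move=> hok; rewrite !stt_mix; case: (boolP (midS u)) => hu //.
  case: hok => [h|hA]; first by rewrite h in hu.
  by rewrite (hA _ _ hag).
have okr u : ~~ midS u -> stt (mix w1 w2) u = stt w2 u /\ stt (mix w2 w1) u = stt w1 u.
  by rewrite !stt_mix => /negbTE ->.
have hP : (\prod_(c : 'I_k * 'I_n | (c.1 * n + c.2 < t0)%N) fac c (mix w1 w2)) *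
          (\prod_(c : 'I_k * 'I_n | (c.1 * n + c.2 < t0)%N) fac c (mix w2 w1)) =
          (\prod_(c : 'I_k * 'I_n | (c.1 * n + c.2 < t0)%N) fac c w1) *
          (\prod_(c : 'I_k * 'I_n | (c.1 * n + c.2 < t0)%N) fac c w2).
  rewrite -!big_split /=; apply: eq_bigr => c hc.
  case: (hcl c.1 c.2 hc) => [[hx [h1 h2]]|[hx [h1 h2]]].
    have [e1 e1'] := okl _ h1; have [e2 e2'] := okl _ h2.
    by rewrite (fac_congr e1 e2) ?mix1 ?hx // (fac_congr e1' e2') ?mix1 ?hx.
  have [e1 e1'] := okr _ h1; have [e2 e2'] := okr _ h2.
  rewrite (fac_congr e1 e2) ?mix1 ?(negbTE hx) // (fac_congr e1' e2') ?mix1 ?(negbTE hx) //.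
  by rewrite mulrC.
rewrite /pp !hind.
transitivity ((ind t0 w2)%:R * (ind t0 w1)%:R * (mux (mix w1 w2) * mux (mix w2 w1)) *
  ((\prod_(c : 'I_k * 'I_n | (c.1 * n + c.2 < t0)%N) fac c (mix w1 w2)) *
   (\prod_(c : 'I_k * 'I_n | (c.1 * n + c.2 < t0)%N) fac c (mix w2 w1)))); last by ring.
rewrite hmux hP; ring.
Qed.

End MixDef.

Lemma lex_lt (a b a' b' : nat) : (b < n)%N -> (b' < n)%N ->
  (a * n + b < a' * n + b')%N = (a < a')%N || ((a == a') && (b < b'))%N.
Proof.
move=> hb hb'; apply/idP/idP.
- move=> h; case: (ltngtP a a') => //= [gt|eq]; [ | subst; lia].
  have : (a'.+1 * n <= a * n)%N by rewrite leq_mul2r gt orbT.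
  nia.
- case/orP => [lt|/andP[/eqP-> lt]]; [|lia].
  have : (a.+1 * n <= a' * n)%N by rewrite leq_mul2r lt orbT.
  nia.
Qed.

Definition mS (mc : nat -> nat -> bool) (u : nat) : bool :=
  (0 < u)%N && mc (u.-1 %/ n)%N (u.-1 %% n)%N.

Lemma mS_succ mc (a b : nat) : (b < n)%N -> mS mc (a * n + b).+1 = mc a b.
Proof. by move=> hb; rewrite /mS /= (divmod_cell a hb).1 (divmod_cell a hb).2. Qed.

Lemma mS_prev mc (a b : nat) : (b < n)%N ->
  mS mc (a * n + b) = if (0 < b)%N then mc a b.-1 else if (0 < a)%N then mc a.-1 n.-1 else false.
Proof.
move=> hb; case: b hb => [|b] hb /=.
  case: a => [|a] //=.
  have -> : (a.+1 * n + 0 = (a * n + n.-1).+1)%N by nia.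
  by rewrite mS_succ // prednK.
by rewrite addnS mS_succ //; apply: ltnW.
Qed.

Lemma MleE w i c : Mle m0 w i c = [seq stt w (i'.-1 * n + c)%N | i' <- iota 1 i].
Proof. by []. Qed.

Lemma Mle_eq_at w1 w2 i c : Mle m0 w1 i c = Mle m0 w2 i c ->
  forall a, (a < i)%N -> stt w1 (a * n + c)%N = stt w2 (a * n + c)%N.
Proof.
rewrite !MleE => h a ha.
have := congr1 (fun s => nth m0 s a) h.
by rewrite /= !(nth_map 0) ?size_iota // nth_iota.
Qed.

Lemma Mle_congr w1 w2 i c :
  (forall a, (a < i)%N -> stt w1 (a * n + c)%N = stt w2 (a * n + c)%N) ->
  Mle m0 w1 i c = Mle m0 w2 i c.
Proof.
move=> h; rewrite !MleE; apply/eq_in_map => i'; rewrite mem_iota => /andP[h1 h2].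
apply: h; case: i' h1 h2 => // i' _; rewrite add1n ltnS //.
Qed.

Lemma stt_upd_le w (a : 'I_k) (b : 'I_n) v u : (u <= a * n + b)%N -> stt (upd w a b v) u = stt w u.
Proof. by move=> h; rewrite stt_upd ltn_eqF. Qed.

Lemma joint_ge0 w : 0 <= joint mu m0 T w.
Proof.
rewrite /joint; apply: mulr_ge0; apply: prodr_ge0 => i _.
  by case: (hmu i) => h _; exact: h.
apply: prodr_ge0 => j _; by case: (hT i j (Mst m0 w i.+1 j) (w.1 j)) => h _; exact: h.
Qed.

Lemma joint_sum1 : \sum_w joint mu m0 T w = 1.
Proof.
have := @marg xpredT 0 (leq0n _) (fun _ _ _ _ _ => erefl).
rewrite /prob_ev => ->.
pose mc : {ffun 'I_k -> {ffun 'I_n -> St}} := [ffun _ => [ffun _ => m0]].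
have hind w : ind 0 w = (w.2 == mc).
  apply/forallP/eqP => [h|->]; last by move=> c; rewrite !ffunE eqxx implybT.
  apply/ffunP => a; apply/ffunP => b; rewrite !ffunE.
  by apply/eqP; exact: (implyP (h (a, b)) (leq0n _)).
rewrite /pp (eq_bigr (fun w : Om => (w.2 == mc)%:R * mux w)); last first.
  by move=> w _; rewrite hind big_pred0 ?mulr1 // => c; rewrite ltn0.
rewrite -(pair_big xpredT xpredT (fun x m => (m == mc)%:R * mux (x, m))) /=.
rewrite (eq_bigr (fun x => mux (x, mc))); last first.
  move=> x _; rewrite (bigD1 mc) //= eqxx mul1r big1 ?addr0 // => m hm.
  by rewrite (negbTE hm) mul0r.
rewrite /mux /= -(bigA_distr_bigA (fun j x => mu j x)) /=.
by apply: big1 => j _; case: (hmu j).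
Qed.

Lemma Pr_marg (t0 : nat) (T' : eqType) (f : Om -> T') : (t0 <= k * n)%N ->
  (forall w (a : 'I_k) (b : 'I_n) v, (t0 <= a * n + b)%N -> f (upd w a b v) = f w) ->
  forall w, Pr (joint mu m0 T) f w = prob_ev (pp t0) (fun w' => f w' == f w).
Proof.
move=> ht hf w; rewrite /Pr (marg ht) // => w' a b v hab.
by rewrite hf.
Qed.

Lemma condind_model (TF TC TD : eqType) (F : Om -> TF) (C : Om -> TC) (D : Om -> TD)
  (midX : pred 'I_n) (midS : pred nat) (t0 : nat) :
  (t0 <= k * n)%N ->
  (forall u, (t0 < u)%N -> ~~ midS u) ->
  (forall (a : 'I_k) (b : 'I_n), (a * n + b < t0)%N ->
     (midX b /\ okS midS (fun w1 w2 => C w1 = C w2) (a * n + b)%N /\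
                okS midS (fun w1 w2 => C w1 = C w2) (a * n + b)%N.+1) \/
     (~~ midX b /\ ~~ midS (a * n + b)%N /\ ~~ midS (a * n + b)%N.+1)) ->
  (forall w (a : 'I_k) (b : 'I_n) v, (t0 <= a * n + b)%N ->
     [/\ F (upd w a b v) = F w, C (upd w a b v) = C w & D (upd w a b v) = D w]) ->
  (forall w1 w2, C w1 = C w2 ->
     [/\ F (mix midX midS w1 w2) = F w1, D (mix midX midS w1 w2) = D w2
       & C (mix midX midS w1 w2) = C w1]) ->
  forall w, Pr (joint mu m0 T) (fun w => (F w, (C w, D w))) w * Pr (joint mu m0 T) C w =
    Pr (joint mu m0 T) (fun w => (F w, C w)) w * Pr (joint mu m0 T) (fun w => (C w, D w)) w.
Proof.
move=> ht hfut hcl hupd hmix w.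
rewrite (@Pr_marg t0 _ (fun w => (F w, (C w, D w)))) //; last first.
  by move=> w' a b v hab; have [h1 h2 h3] := hupd w' a b v hab; rewrite h1 h2 h3.
rewrite (@Pr_marg t0 _ C) //; last first.
  by move=> w' a b v hab; have [h1 h2 h3] := hupd w' a b v hab.
rewrite (@Pr_marg t0 _ (fun w => (F w, C w))) //; last first.
  by move=> w' a b v hab; have [h1 h2 h3] := hupd w' a b v hab; rewrite h1 h2.
rewrite (@Pr_marg t0 _ (fun w => (C w, D w))) //; last first.
  by move=> w' a b v hab; have [h1 h2 h3] := hupd w' a b v hab; rewrite h2 h3.
apply: (@mix_prod _ _ (pp t0) _ _ _ F C D (mix midX midS)) => w1 w2 e.
have [f1 d1 c1] := hmix w1 w2 e.
split => //; first exact: mix_invol.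
exact: (pp_mix hfut hcl).
Qed.

Definition xv (w : Om) (b : nat) : option X :=
  match @insub _ (fun x => (x < n)%N) 'I_n b with
  | Some b' => Some (w.1 b')
  | None => None
  end.

Lemma xv_ord w (b : 'I_n) : xv w b = Some (w.1 b).
Proof.
rewrite /xv; case: insubP => [b' _ hb'|]; last by rewrite ltn_ord.
by have -> : b' = b by apply: val_inj.
Qed.

Lemma xv_upd w a b v c : xv (upd w a b v) c = xv w c.
Proof. by []. Qed.

Lemma xv_mix_r (midX : pred 'I_n) (midS : pred nat) (w1 w2 : Om) c : (forall b' : 'I_n, val b' = c -> ~~ midX b') ->
  xv (mix midX midS w1 w2) c = xv w2 c.
Proof.
by move=> h; rewrite /xv; case: insubP => // b' _ hb'; rewrite mix1 (negbTE (h b' hb')).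
Qed.

Lemma xv_mix_l (midX : pred 'I_n) (midS : pred nat) (w1 w2 : Om) c : (forall b' : 'I_n, val b' = c -> midX b') ->
  xv (mix midX midS w1 w2) c = xv w1 c.
Proof.
by move=> h; rewrite /xv; case: insubP => // b' _ hb'; rewrite mix1 (h b' hb').
Qed.

Lemma mS_prevP mc (a b : nat) (P : bool -> Prop) : (b < n)%N ->
  ((0 < b)%N -> P (mc a b.-1)) -> (b = 0%N -> (0 < a)%N -> P (mc a.-1 n.-1)) ->
  ((a * n + b = 0)%N -> P false) -> P (mS mc (a * n + b)%N).
Proof.
move=> hb h1 h2 h3; rewrite mS_prev //.
case: (posnP b) => [b0|bp] /=; last exact: h1.
case: (posnP a) => [a0|ap] /=; last exact: h2.
by apply: h3; rewrite a0 b0.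
Qed.

Lemma Mle_upd w (a : 'I_k) (b : 'I_n) v i c (t0 : nat) :
  (forall a', (a' < i)%N -> (a' * n + c <= t0)%N) -> (t0 <= a * n + b)%N ->
  Mle m0 (upd w a b v) i c = Mle m0 w i c.
Proof.
move=> h ht; apply: Mle_congr => a' ha'; apply: stt_upd_le.
exact: leq_trans (h a' ha') ht.
Qed.

Lemma Mle_mix_r (midX : pred 'I_n) (midS : pred nat) (w1 w2 : Om) i c :
  (forall a', (a' < i)%N -> ~~ midS (a' * n + c)%N) ->
  Mle m0 (mix midX midS w1 w2) i c = Mle m0 w2 i c.
Proof.
by move=> h; apply: Mle_congr => a' ha'; rewrite stt_mix (negbTE (h a' ha')).
Qed.

Lemma Mle_mix_agree (midX : pred 'I_n) (midS : pred nat) (w1 w2 : Om) i c :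
  Mle m0 w1 i c = Mle m0 w2 i c ->
  Mle m0 (mix midX midS w1 w2) i c = Mle m0 w1 i c.
Proof.
move=> h; apply: Mle_congr => a' ha'; rewrite stt_mix.
by case: (midS _) => //; rewrite (Mle_eq_at h ha').
Qed.

Lemma log2_card : log2 (#|{: St}|%:R : R) = s%:R.
Proof.
rewrite card_tuple card_bool natrX /log2 lnXn ?ltr0n //.
by rewrite -[ln 2 *+ s]mulr_natr mulrAC divff ?mul1r // gt_eqF // ln2_gt0.
Qed.

Section Sum1.
Variables (i0 : 'I_k) (j0 : 'I_n).

Definition C1 (l : nat) (w : Om) := (Mle m0 w i0.+1 l, Mle m0 w i0 j0.+1).
Definition D1 (l : nat) (w : Om) :=
  ([seq xv w b | b <- iota 0 l], [seq Mle m0 w i0.+1 c | c <- iota 0 l]).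
Definition midX1 (l : nat) : pred 'I_n := fun b => (l <= b)%N && (b <= j0)%N.
Definition mc1 (l : nat) (a b : nat) : bool :=
  ((a == i0) && (l <= b)%N && (b <= j0)%N) || ((a < i0)%N && (l <= b)%N && (b < j0)%N).
Definition A1 (w : Om) := Mst m0 w i0.+1 j0.+1.
Definition t01 := (i0 * n + j0).+1.

Lemma C1_inj l w1 w2 : C1 l w1 = C1 l w2 ->
  Mle m0 w1 i0.+1 l = Mle m0 w2 i0.+1 l /\ Mle m0 w1 i0 j0.+1 = Mle m0 w2 i0 j0.+1.
Proof. by move=> e; split; [exact: (congr1 fst e) | exact: (congr1 snd e)]. Qed.

Lemma t01_le : (t01 <= k * n)%N.
Proof. rewrite /t01; have := ltn_ord i0; have := ltn_ord j0; nia. Qed.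

Lemma prod1 (l : nat) (TF : eqType) (F : Om -> TF) : (l <= j0)%N ->
  (forall w1 w2, F (mix (midX1 l) (mS (mc1 l)) w1 w2) = F w1) ->
  (forall w (a : 'I_k) (b : 'I_n) v, (t01 <= a * n + b)%N -> F (upd w a b v) = F w) ->
  forall w, Pr (joint mu m0 T) (fun w => (F w, (C1 l w, D1 l w))) w * Pr (joint mu m0 T) (C1 l) w =
    Pr (joint mu m0 T) (fun w => (F w, C1 l w)) w * Pr (joint mu m0 T) (fun w => (C1 l w, D1 l w)) w.
Proof.
move=> hl hFm hFu.
have hj := ltn_ord j0; have hi := ltn_ord i0.
have n0 : (0 < n)%N by apply: leq_ltn_trans hj.
apply: (condind_model (midX := midX1 l) (midS := mS (mc1 l)) t01_le).
- move=> u hu; rewrite /mS; case: u hu => // u hu /=.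
  have hb := ltn_pmod u n0.
  have hlex : (i0 < u %/ n)%N || ((i0 == u %/ n :> nat) && (j0 < u %% n))%N.
    by rewrite -lex_lt // -divn_eq.
  move: hlex; rewrite /mc1; move: (u %/ n)%N (u %% n)%N => a b; lia.
- move=> a b hab.
  have hb := ltn_ord b.
  have hnf : (a < i0)%N || ((a == i0 :> nat) && (b <= j0))%N.
    by move: hab; rewrite /t01 ltnS leqNgt lex_lt // negb_or negb_and -leqNgt; lia.
  case: (ltnP b l) => hbl.
    right; split; first by rewrite /midX1; lia.
    split; last by rewrite mS_succ // /mc1; lia.
    apply: (@mS_prevP _ _ _ (fun x => ~~ x)) => //; move=> *; rewrite /mc1; lia.
  case: (leqP b j0) => hbj.
    left; split; first by rewrite /midX1; lia.
    split.
      case: (ltngtP l b) => [hlb|hlb|hlb]; [|lia|].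
        left; apply: (@mS_prevP _ _ _ (fun x => x)) => //; move=> *; rewrite /mc1; lia.
      right => w1 w2 /C1_inj [e1 e2]; rewrite -hlb.
      by apply: (Mle_eq_at e1); rewrite ltnS; lia.
    case: (boolP ((a < i0)%N && (b == j0 :> nat))) => [/andP[ha /eqP hbj0]|hne].
      right => w1 w2 /C1_inj [e1 e2]; rewrite -addnS hbj0.
      exact: (Mle_eq_at e2).
    by left; rewrite mS_succ // /mc1; lia.
  right; split; first by rewrite /midX1; lia.
  split; last by rewrite mS_succ // /mc1; lia.
  apply: (@mS_prevP _ _ _ (fun x => ~~ x)) => //; move=> *; rewrite /mc1; lia.
- move=> w a b v hab; split; first exact: hFu.
    rewrite /C1 (@Mle_upd _ _ _ _ _ _ t01) // ?(@Mle_upd _ _ _ _ _ _ t01) //.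
      by move=> a' ha'; rewrite /t01; nia.
    by move=> a' ha'; rewrite /t01; nia.
  rewrite /D1; congr (_, _); apply/eq_in_map => c; rewrite mem_iota => /andP[_ hc].
  rewrite (@Mle_upd _ _ _ _ _ _ t01) // => a' ha'; rewrite /t01; nia.
- move=> w1 w2 /C1_inj [e1 e2]; split; first exact: hFm.
    rewrite /D1; congr (_, _); apply/eq_in_map => c; rewrite mem_iota => /andP[_ hc].
      by apply: xv_mix_r => b' hb'; rewrite /midX1 hb'; lia.
    apply: Mle_mix_r => a' ha'.
    apply: (@mS_prevP _ _ _ (fun x => ~~ x)) => //; move=> *; rewrite /mc1; lia.
  by rewrite /C1 !Mle_mix_agree.
Qed.

Lemma A1_mix l w1 w2 : (l <= j0)%N -> A1 (mix (midX1 l) (mS (mc1 l)) w1 w2) = A1 w1.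
Proof.
move=> hl; rewrite /A1 !MstE /= addnS stt_mix mS_succ ?ltn_ord // /mc1 eqxx leqnn hl.
by [].
Qed.

Lemma A1_upd w (a : 'I_k) (b : 'I_n) v : (t01 <= a * n + b)%N -> A1 (upd w a b v) = A1 w.
Proof. by move=> h; rewrite /A1 !MstE /= stt_upd_le // addnS. Qed.

Lemma sum1_bound :
  \sum_(l0 < n | (l0 <= j0)%N) cmi (joint mu m0 T) (fun w => Mst m0 w i0.+1 j0.+1) (Xel l0)
        (fun w => (Mle m0 w i0.+1 l0, Mle m0 w i0 j0.+1)) <= s%:R.
Proof.
have hj := ltn_ord j0.
pose F l := cmi (joint mu m0 T) A1 (fun w => xv w l) (C1 l).
have E1 : \sum_(l0 < n | (l0 <= j0)%N) cmi (joint mu m0 T) (fun w => Mst m0 w i0.+1 j0.+1) (Xel l0)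
        (fun w => (Mle m0 w i0.+1 l0, Mle m0 w i0 j0.+1)) = \sum_(0 <= l < j0.+1) F l.
  rewrite (eq_bigr (fun l0 : 'I_n => F l0)); last first.
    move=> l0 _; apply: (cmi_ext joint_ge0) => // w w'.
    by rewrite /Xel !xv_ord.
  rewrite -(big_mkord (fun l => (l <= j0)%N) F).
  rewrite (@big_cat_nat _ _ _ j0.+1) //=.
  rewrite [X in _ + X]big_nat_cond [X in _ + X]big1 ?addr0; last first.
    by move=> l hl; exfalso; move: hl; lia.
  rewrite big_nat_cond [RHS]big_nat_cond; apply: eq_bigl => l; lia.
rewrite E1 -log2_card.
apply: (tele joint_ge0 joint_sum1 (G := fun l w => (C1 l w, D1 l w))
          (M := fun l w => Mle m0 w i0.+1 l.+1)) => // l /andP[_ hl].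
  rewrite ltnS in hl.
  apply: cmi_condind; first exact: joint_ge0.
  - apply: prod1 => //; first by move=> w1 w2; exact: A1_mix.
    by move=> w a b v hab; exact: A1_upd.
  - apply: prod1 => //.
      by move=> w1 w2; apply: xv_mix_l => b' hb'; rewrite /midX1 hb' leqnn hl.
  - apply: (prod1 (F := fun w => (A1 w, xv w l))) => //.
      by move=> w1 w2; rewrite A1_mix //; congr (_, _); apply: xv_mix_l => b' hb'; rewrite /midX1 hb' leqnn hl.
    by move=> w a b v hab; rewrite A1_upd.
move=> w w'.
have hi : iota 0 l.+1 = rcons (iota 0 l) l by rewrite -addn1 iotaD add0n cats1.
rewrite /C1 /D1 hi !map_rcons !xpair_eqE !eqseq_rcons.
move: (Mle m0 w' i0.+1 l.+1 == _) (Mle m0 w' i0 j0.+1 == _) ([seq xv w' b | b <- _] == _)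
  (xv w' l == _) ([seq Mle m0 w' i0.+1 c | c <- _] == _) (Mle m0 w' i0.+1 l == _).
by case; case; case; case; case; case.
Qed.

End Sum1.

Section Sum2.
Variables (i0 : 'I_k) (j0 : 'I_n).

Definition C2 (l : nat) (w : Om) := (Mle m0 w i0 l, Mle m0 w i0 j0.+1).
Definition D2 (l : nat) (w : Om) :=
  ([seq xv w b | b <- iota j0.+1 (l - j0.+1)], [seq Mle m0 w i0 c | c <- iota j0.+1 (l - j0.+1)]).
Definition midX2 (l : nat) : pred 'I_n := fun b => (l <= b)%N || (b <= j0)%N.
Definition mc2 (l : nat) (a b : nat) : bool :=
  ((a < i0)%N && ((l <= b)%N || (b < j0)%N)) || ((a == i0) && (b <= j0)%N).

Lemma C2_inj l w1 w2 : C2 l w1 = C2 l w2 ->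
  Mle m0 w1 i0 l = Mle m0 w2 i0 l /\ Mle m0 w1 i0 j0.+1 = Mle m0 w2 i0 j0.+1.
Proof. by move=> e; split; [exact: (congr1 fst e) | exact: (congr1 snd e)]. Qed.

Lemma prod2 (l : nat) (TF : eqType) (F : Om -> TF) : (j0 < l)%N -> (l < n)%N ->
  (forall w1 w2, F (mix (midX2 l) (mS (mc2 l)) w1 w2) = F w1) ->
  (forall w (a : 'I_k) (b : 'I_n) v, (t01 i0 j0 <= a * n + b)%N -> F (upd w a b v) = F w) ->
  forall w, Pr (joint mu m0 T) (fun w => (F w, (C2 l w, D2 l w))) w * Pr (joint mu m0 T) (C2 l) w =
    Pr (joint mu m0 T) (fun w => (F w, C2 l w)) w * Pr (joint mu m0 T) (fun w => (C2 l w, D2 l w)) w.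
Proof.
move=> hjl hln hFm hFu.
have hj := ltn_ord j0; have hi := ltn_ord i0.
have n0 : (0 < n)%N by apply: leq_ltn_trans hj.
apply: (condind_model (midX := midX2 l) (midS := mS (mc2 l)) (t01_le i0 j0)).
- move=> u hu; rewrite /mS; case: u hu => // u hu /=.
  have hb := ltn_pmod u n0.
  have hlex : (i0 < u %/ n)%N || ((i0 == u %/ n :> nat) && (j0 < u %% n))%N.
    by rewrite -lex_lt // -divn_eq.
  move: hlex; rewrite /mc2; move: (u %/ n)%N (u %% n)%N => a b; lia.
- move=> a b hab.
  have hb := ltn_ord b.
  have hnf : (a < i0)%N || ((a == i0 :> nat) && (b <= j0))%N.
    by move: hab; rewrite /t01 ltnS leqNgt lex_lt // negb_or negb_and -leqNgt; lia.
  have hprev : ~~ ((a < i0)%N && (j0 < b)%N && (b < l)%N) ->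
      okS (mS (mc2 l)) (fun w1 w2 => C2 l w1 = C2 l w2) (a * n + b)%N.
    move=> hnm.
    case: (boolP ((a < i0)%N && (b == l :> nat))) => [/andP[ha /eqP hbl]|hne].
      right => w1 w2 /C2_inj [e1 e2]; rewrite hbl.
      exact: (Mle_eq_at e1).
    apply: (@mS_prevP _ _ _ (fun x => x \/ (forall w1 w2, C2 l w1 = C2 l w2 ->
                     stt w1 (a * n + b)%N = stt w2 (a * n + b)%N))) => //.
    + by move=> *; left; rewrite /mc2; lia.
    + by move=> *; left; rewrite /mc2; lia.
    + by move=> h0; right => w1 w2 _; rewrite h0.
  case: (boolP ((a < i0)%N && (j0 < b)%N && (b < l)%N)) => hmid.
    right; split; first by rewrite /midX2; lia.
    split; last by rewrite mS_succ // /mc2; lia.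
    apply: (@mS_prevP _ _ _ (fun x => ~~ x)) => //; move=> *; rewrite /mc2; lia.
  left; split; first by rewrite /midX2; lia.
  split; first exact: hprev.
  case: (boolP ((a < i0)%N && (b == j0 :> nat))) => [/andP[ha /eqP hbj0]|hne].
    right => w1 w2 /C2_inj [e1 e2]; rewrite -addnS hbj0.
    exact: (Mle_eq_at e2).
  by left; rewrite mS_succ // /mc2; lia.
- move=> w a b v hab; split; first exact: hFu.
    rewrite /C2 (@Mle_upd _ _ _ _ _ _ (t01 i0 j0)) // ?(@Mle_upd _ _ _ _ _ _ (t01 i0 j0)) //.
      by move=> a' ha'; rewrite /t01; nia.
    by move=> a' ha'; rewrite /t01; nia.
  rewrite /D2; congr (_, _); apply/eq_in_map => c; rewrite mem_iota => /andP[h1 hc].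
  rewrite (@Mle_upd _ _ _ _ _ _ (t01 i0 j0)) // => a' ha'; rewrite /t01; nia.
- move=> w1 w2 /C2_inj [e1 e2]; split; first exact: hFm.
    rewrite /D2; congr (_, _); apply/eq_in_map => c; rewrite mem_iota => /andP[h1 hc].
      by apply: xv_mix_r => b' hb'; rewrite /midX2 hb'; lia.
    apply: Mle_mix_r => a' ha'.
    apply: (@mS_prevP _ _ _ (fun x => ~~ x)) => //; move=> *; rewrite /mc2; lia.
  by rewrite /C2 !Mle_mix_agree.
Qed.

Lemma A1_mix2 l w1 w2 : A1 i0 j0 (mix (midX2 l) (mS (mc2 l)) w1 w2) = A1 i0 j0 w1.
Proof.
rewrite /A1 !MstE /= addnS stt_mix mS_succ ?ltn_ord // /mc2 eqxx leqnn ltnn orbT.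
by [].
Qed.

Lemma sum2_bound :
  \sum_(l0 < n | (j0 < l0)%N) cmi (joint mu m0 T) (fun w => Mst m0 w i0.+1 j0.+1) (Xel l0)
        (fun w => (Mle m0 w i0 l0, Mle m0 w i0 j0.+1)) <= s%:R.
Proof.
have hj := ltn_ord j0.
pose F l := cmi (joint mu m0 T) (A1 i0 j0) (fun w => xv w l) (C2 l).
have E1 : \sum_(l0 < n | (j0 < l0)%N) cmi (joint mu m0 T) (fun w => Mst m0 w i0.+1 j0.+1) (Xel l0)
        (fun w => (Mle m0 w i0 l0, Mle m0 w i0 j0.+1)) = \sum_(j0.+1 <= l < n) F l.
  rewrite (eq_bigr (fun l0 : 'I_n => F l0)); last first.
    move=> l0 _; apply: (cmi_ext joint_ge0) => // w w'.
    by rewrite /Xel !xv_ord.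
  rewrite -(big_mkord (fun l => (j0 < l)%N) F).
  rewrite (@big_cat_nat _ _ _ j0.+1) //=.
  rewrite [X in X + _]big_nat_cond [X in X + _]big1 ?add0r; last first.
    by move=> l hl; exfalso; move: hl; lia.
  rewrite big_nat_cond [RHS]big_nat_cond; apply: eq_bigl => l; lia.
rewrite E1 -log2_card.
apply: (tele joint_ge0 joint_sum1 (G := fun l w => (C2 l w, D2 l w))
          (M := fun l w => Mle m0 w i0 l.+1)) => // l /andP[hl1 hl2].
  apply: cmi_condind; first exact: joint_ge0.
  - apply: prod2 => //; first by move=> w1 w2; exact: A1_mix2.
    by move=> w a b v hab; exact: A1_upd.
  - apply: prod2 => //.
      by move=> w1 w2; apply: xv_mix_l => b' hb'; rewrite /midX2 hb' leqnn.
  - apply: (prod2 (F := fun w => (A1 i0 j0 w, xv w l))) => //.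
      by move=> w1 w2; rewrite A1_mix2 //; congr (_, _); apply: xv_mix_l => b' hb'; rewrite /midX2 hb' leqnn.
    by move=> w a b v hab; rewrite A1_upd.
move=> w w'.
have hi : iota j0.+1 (l.+1 - j0.+1) = rcons (iota j0.+1 (l - j0.+1)) l.
  have -> : (l.+1 - j0.+1 = (l - j0.+1) + 1)%N by lia.
  by rewrite iotaD cats1 subnKC.
rewrite /C2 /D2 hi !map_rcons !xpair_eqE !eqseq_rcons.
move: (Mle m0 w' i0 l.+1 == _) (Mle m0 w' i0 j0.+1 == _) ([seq xv w' b | b <- _] == _)
  (xv w' l == _) ([seq Mle m0 w' i0 c | c <- _] == _) (Mle m0 w' i0 l == _).
by case; case; case; case; case; case.
Qed.

End Sum2.

End Model.



Theorem lemma1p1 (R : realType) (X : finType) (n k s : nat)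
    (mu : 'I_n -> {ffun X -> R})
    (m0 : s.-tuple bool)
    (T : 'I_k -> 'I_n -> s.-tuple bool -> X -> {ffun s.-tuple bool -> R}) :
  (forall j, is_distr (mu j)) ->
  (forall i j st x, is_distr (T i j st x)) ->
  MIC mu m0 T <= (2 * k * s * n)%:R.
Proof.
move=> hmu hT; rewrite /MIC; cbv zeta.
apply: (le_trans (y := \sum_(i0 < k) \sum_(j0 < n) (s%:R : R) +
                       \sum_(i0 < k) \sum_(j0 < n) (s%:R : R))).
  apply: lerD; apply: ler_sum => i0 _; apply: ler_sum => j0 _.
    exact: (sum1_bound m0 hmu hT i0 j0).
  exact: (sum2_bound m0 hmu hT i0 j0).
rewrite !sumr_const !card_ord -!mulrnA -natrD ler_nat.
nia.
Qed.
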